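(* Let $\mathbb{M}\in\{\mathbb{N},\mathbb{Z}\}$, let $F:A^{\mathbb{M}}\to A^{\mathbb{M}}$ be a cellular automaton that is not nilpotent, and let $s\in A$ be a spreading state of $F$. Then there exists $c\in A^{\mathbb{M}}$ such that $F^n(c)_j\neq s$ for all $n\in\mathbb{N}$ and all $j\in\mathbb{M}$.
   Context: A CA is a continuous shift-commuting map on the full shift $A^{\mathbb{M}}$ over a finite alphabet, given by a local rule. A state $s$ is spreading if the local rule maps every neighborhood pattern containing $s$ to $s$. $F$ is nilpotent if there is a state $q$ with $F({}^\omega q^\omega)={}^\omega q^\omega$ (constant configuration) such that for every $c$ there is $n$ with $F^n(c)={}^\omega q^\omega$. *)

(* Defs.v *)
From mathcomp Require Import all_boot all_order all_algebra.
Set Implicit Arguments. Unset Strict Implicit. Unset Printing Implicit Defensive.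

Definition ca_global (M : Type) (add : M -> M -> M) (A : finType) (k : nat)
  (N : k.-tuple M) (f : k.-tuple A -> A) (c : M -> A) : M -> A :=
  fun j => f [tuple c (add j (tnth N i)) | i < k].

Definition spreading (A : finType) (k : nat) (f : k.-tuple A -> A) (s : A) : Prop :=
  forall p : k.-tuple A, s \in p -> f p = s.

Definition nilpotent (M A : Type) (F : (M -> A) -> (M -> A)) : Prop :=
  exists q : A, (forall j, F (fun _ => q) j = q) /\
    forall c : M -> A, exists n : nat, forall j, iter n F c j = q.

(* Main.v *)
Require Import Defs.
From mathcomp Require Import all_boot all_order all_algebra.
From mathcomp Require Import zify ring.
From Stdlib Require Import Classical ClassicalEpsilon.
Import GRing.Theory Num.Theory.

Lemma pigeon (B : finType) (h : nat -> B) (Q : nat -> Prop) :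
  (forall T0, exists t, (T0 <= t)%N /\ Q t) ->
  exists b, forall T0, exists t, [/\ (T0 <= t)%N, Q t & h t = b].
Proof.
move=> HQ; apply: NNPP => H.
have H1 : forall b, exists T, forall t, (T <= t)%N -> Q t -> h t <> b.
  move=> b; apply: NNPP => Hb; apply: H; exists b => T0.
  apply: NNPP => HT; apply: Hb; exists T0 => t Ht Qt E; apply: HT; by exists t.
have H2 : forall s : seq B, exists T, forall b, b \in s ->
    forall t, (T <= t)%N -> Q t -> h t <> b.
  elim=> [|b s [T IH]]; first by exists 0%N.
  have [Tb Hb] := H1 b; exists (maxn T Tb) => b'; rewrite inE => /orP [/eqP ->|bs] t Ht.
    by apply: Hb; apply: leq_trans Ht; apply: leq_maxr.
  by apply: IH => //; apply: leq_trans Ht; apply: leq_maxl.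
have [T HT] := H2 (enum B).
have [t [Ht Qt]] := HQ T.
have Hm : h t \in enum B by rewrite mem_enum.
exact: (HT (h t) Hm t Ht Qt).
Qed.

Definition Inf (A : Type) (e : nat -> int -> A) R (w : int -> A) :=
  forall T0, exists t, (T0 <= t)%N /\ forall x : int, (absz x < R)%N -> e t x = w x.
Arguments Inf {A}.

Lemma inf_step (A : finType) (e : nat -> int -> A) R w : Inf e R w ->
  exists w', Inf e R.+1 w' /\ forall x, (absz x < R)%N -> w' x = w x.
Proof.
move=> H.
have [[a b] Hab] := @pigeon _ (fun t => (e t (Posz R), e t (- Posz R)%R)) (fun t => forall x : int, (absz x < R)%N -> e t x = w x) H.
exists (fun x => if x == (Posz R) then a else if x == (- (Posz R))%R then b else w x).
split; last first.
  move=> x Hx; case: eqP => [E|_]; first by exfalso; rewrite E /= in Hx; lia.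
  case: eqP => [E|//]; by exfalso; rewrite E in Hx; lia.
move=> T0; have [t [Ht Qt [Ea Eb]]] := Hab T0; exists t; split => // x Hx.
case: eqP => [->|Ha] //; case: eqP => [->|Hb] //.
apply: Qt; lia.
Qed.

Lemma compact (A : finType) (a0 : A) (e : nat -> int -> A) :
  exists c : int -> A, forall R T0, exists t, (T0 <= t)%N /\
    forall x : int, (absz x < R)%N -> e t x = c x.
Proof.
have I0 : Inf e 0 (fun _ => a0) by move=> T0; exists T0.
pose nxt (R : nat) (w : {w | Inf e R w}) : {w' | Inf e R.+1 w' /\
    forall x, (absz x < R)%N -> w' x = sval w x} :=
  constructive_indefinite_description _ (@inf_step _ _ _ _ (proj2_sig w)).
pose W := fix W (R : nat) : {w | Inf e R w} :=
  match R with 0 => exist _ _ I0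
  | R'.+1 => exist _ (sval (nxt R' (W R'))) (proj1 (proj2_sig (nxt R' (W R')))) end.
have cons1 : forall R x, (absz x < R)%N -> sval (W R.+1) x = sval (W R) x.
  by move=> R x Hx /=; rewrite (proj2 (proj2_sig (nxt R (W R)))).
exists (fun x => sval (W (absz x).+1) x) => R T0.
have [t [Ht Et]] := proj2_sig (W R) T0; exists t; split => // x Hx.
rewrite Et //.
have : forall n, sval (W ((absz x).+1 + n)%N) x = sval (W (absz x).+1) x.
  elim=> [|n IH]; first by rewrite addn0.
  by rewrite addnS cons1 // ; lia.
move/(_ (R - (absz x).+1)%N); rewrite subnKC //.
Qed.

Section ZCA.
Variables (A : finType) (k : nat) (N : k.-tuple int) (f : k.-tuple A -> A).
Local Notation F := (ca_global (fun x y : int => (x + y)%R) N f).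

Lemma dep (P : nat -> int -> Prop) (P0 : P 0 0%R)
  (PS : forall m y i, P m y -> P m.+1 (tnth N i + y)%R) m :
  forall c c' x x', (forall y, P m y -> c (x + y)%R = c' (x' + y)%R) ->
  iter m F c x = iter m F c' x'.
Proof.
elim: m => [|m IH] c c' x x' H.
  by have := H 0%R P0; rewrite !addr0.
rewrite !iterS /ca_global; congr f; apply: eq_from_tnth => i.
rewrite !tnth_mktuple; apply: IH => y Py.
by rewrite -!addrA; apply: H; apply: PS.
Qed.

Definition vs (l : seq 'I_k) : int := (\sum_(i <- l) tnth N i)%R.

Lemma cone s (sp : spreading f s) (l : seq 'I_k) : forall t c x,
  iter (size l + t) F c x != s -> iter t F c (x + vs l)%R != s.
Proof.
elim: l => [|i l IH] t c x /=.
  by rewrite /vs big_nil addr0.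
move=> H.
rewrite /vs big_cons addrA; apply: IH.
apply/eqP => E; move/eqP: H; apply; rewrite /ca_global; apply: sp.
by have := mem_tnth i [tuple iter (size l + t) F c (x + tnth N i0)%R | i0 < k];
  rewrite tnth_mktuple E.
Qed.

Lemma step1 s (sp : spreading f s) (i0 : 'I_k) (nn : ~ nilpotent F) t a :
  exists c, iter t F c a != s.
Proof.
apply: NNPP => H; apply: nn; exists s; split.
  move=> j; rewrite /ca_global; apply: sp.
  by have := mem_tnth i0 [tuple s | i < k]; rewrite tnth_mktuple.
move=> c; exists t => j.
have -> : iter t F c j = iter t F (fun y => c (y + (j - a))%R) a.
  apply: (@dep (fun _ _ => True)) => // y _; congr c; ring.
apply/eqP; apply: NNPP => H2; apply: H; exists (fun y => c (y + (j - a))%R); exact/negP.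
Qed.

Definition dd (i0 : 'I_k) (i : 'I_k) : int := (tnth N i - tnth N i0)%R.
Definition ds i0 (l : seq 'I_k) : int := (\sum_(i <- l) dd i0 i)%R.

Lemma ds_cat i0 l1 l2 : ds i0 (l1 ++ l2) = (ds i0 l1 + ds i0 l2)%R.
Proof. by rewrite /ds big_cat. Qed.

Lemma ds_rep i0 n l : ds i0 (flatten (nseq n l)) = (ds i0 l *+ n)%R.
Proof.
elim: n => [|n IH] /=; first by rewrite /ds big_nil.
by rewrite ds_cat IH mulrS.
Qed.

Lemma vs_ds i0 l : vs l = (ds i0 l + tnth N i0 *+ size l)%R.
Proof.
elim: l => [|i l IH] /=; first by rewrite /vs /ds !big_nil.
rewrite /vs /ds !big_cons -/(vs l) -/(ds i0 l) IH /dd mulrS; ring.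
Qed.

Lemma rep i0 (a : int) l1 l2 : exists l1' l2',
  (ds i0 l1' - ds i0 l2' = a * (ds i0 l1 - ds i0 l2))%R.
Proof.
case: a => n.
  exists (flatten (nseq n l1)), (flatten (nseq n l2)); rewrite !ds_rep; lia.
exists (flatten (nseq n.+1 l2)), (flatten (nseq n.+1 l1)); rewrite !ds_rep; lia.
Qed.

Lemma bez i0 : exists lP lQ, forall i, ((ds i0 lP - ds i0 lQ) %| dd i0 i)%Z.
Proof.
suff H : forall I : seq 'I_k, exists lP lQ, forall i, i \in I ->
    ((ds i0 lP - ds i0 lQ) %| dd i0 i)%Z.
  by have [lP [lQ H']] := H (enum 'I_k); exists lP, lQ => i; apply: H'; rewrite mem_enum.
elim=> [|j I [lP [lQ IH]]]; first by exists [::], [::].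
set g := (ds i0 lP - ds i0 lQ)%R.
have [u [v Huv]] := Bezoutz g (dd i0 j).
have [L1 [L2 HL]] := rep i0 u lP lQ.
have [M1 [M2 HM]] := rep i0 v [:: j] [::].
exists (L1 ++ M1), (L2 ++ M2) => i; rewrite inE.
have -> : (ds i0 (L1 ++ M1) - ds i0 (L2 ++ M2))%R = gcdz g (dd i0 j).
  rewrite -Huv !ds_cat.
  have Hd : (ds i0 [:: j] - ds i0 [::] = dd i0 j)%R by rewrite /ds big_cons !big_nil; ring.
  rewrite Hd in HM; rewrite -/g in HL; lia.
case/orP => [/eqP -> | iI]; first exact: dvdz_gcdr.
exact: dvdz_trans (dvdz_gcdl _ _) (IH i iI).
Qed.

Lemma size_rep (n : nat) (l : seq 'I_k) : size (flatten (nseq n l)) = (n * size l)%N.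
Proof. by elim: n => [|n IH] //=; rewrite size_cat IH mulSn. Qed.

Lemma ds_nseq0 i0 n : ds i0 (nseq n i0) = 0%R.
Proof.
elim: n => [|n IH] /=; first by rewrite /ds big_nil.
by rewrite /ds big_cons -/(ds i0 _) IH /dd subrr addr0.
Qed.

Lemma mainZ s (sp : spreading f s) (nn : ~ nilpotent F) :
  exists c, forall n j, iter n F c j != s.
Proof.
case: (posnP k) => [k0|kpos].
  exfalso; apply: nn.
  have Ht : forall t : k.-tuple A, t = [tuple s | i < k].
    move=> t; apply: eq_from_tnth => i; exfalso; have := ltn_ord i; lia.
  exists (f [tuple s | i < k]); split; first by move=> j; rewrite /ca_global; congr f; exact: Ht.
  by move=> c; exists 1%N => j /=; rewrite /ca_global; congr f; exact: Ht.
pose i0 := Ordinal kpos.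
set v1 := tnth N i0.
have [lP [lQ Hbez]] := bez i0.
set P := ds i0 lP; set Q := ds i0 lQ; set g := (P - Q)%R.
set L := (size lP + size lQ)%N.
have Good : forall K, exists e, forall m j', (m <= K)%N -> (j' <= 2 * K)%N ->
    iter m F e (- (v1 *+ m) + (Posz j' - Posz K) * g)%R != s.
  move=> K.
  pose T := (K + 2 * K * L)%N.
  have [e He] := step1 s sp i0 nn T (- (v1 *+ T) - (P + Q) *+ K)%R.
  exists e => m j' Hm Hj.
  pose l := flatten (nseq j' lP) ++ flatten (nseq (2 * K - j') lQ).
  have Hsl : (size l <= 2 * K * L)%N.
    rewrite /l size_cat !size_rep /L; nia.
  pose lf := l ++ nseq (T - m - size l) i0.
  have Hslf : (size lf + m = T)%N.
    rewrite /lf size_cat size_nseq /T; lia.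
  have := cone s sp lf m e (- (v1 *+ T) - (P + Q) *+ K)%R.
  rewrite Hslf => /(_ He).
  rewrite (vs_ds i0) /lf ds_cat ds_nseq0 /l ds_cat !ds_rep -/P -/Q.
  have -> : size lf = (T - m)%N by lia.
  rewrite -/v1.
  set X := (v1 *- T - _ + _)%R; set Y := (v1 *- m + _)%R.
  suff -> : X = Y by [].
  have HmT : (m <= T)%N by rewrite /T; lia.
  have Ea : (Posz (2 * K - j') = Posz K + Posz K - Posz j')%R by lia.
  have Eb : (Posz T = Posz m + Posz (T - m))%R by lia.
  rewrite /X /Y /g !pmulrn !mulrzz Ea Eb; ring.
pose E K := proj1_sig (constructive_indefinite_description _ (Good K)).
have HE : forall K m j', (m <= K)%N -> (j' <= 2 * K)%N ->
    iter m F (E K) (- (v1 *+ m) + (Posz j' - Posz K) * g)%R != s.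
  move=> K; exact: (proj2_sig (constructive_indefinite_description _ (Good K))).
have [cs Hcs] := @compact _ s E.
pose B := (\max_(i < k) absz (tnth N i))%N.
have Hstar : forall m (j : int), iter m F cs (- (v1 *+ m) + j * g)%R != s.
  move=> m j.
  set x := (- (v1 *+ m) + j * g)%R.
  have [t [Ht Et]] := Hcs (absz x + m * B).+1%N (m + absz j)%N.
  rewrite (@dep (fun m y => (absz y <= m * B)%N) _ _ m cs (E t) x x).
  - have -> : x = (- (v1 *+ m) + (Posz (absz (j + Posz t)) - Posz t) * g)%R.
      rewrite /x; congr (_ + _ * _)%R; lia.
    apply: HE; lia.
  - by [].
  - move=> m' y i Hy; have := @leq_bigmax _ (fun i => absz (tnth N i)) i; rewrite -/B; lia.
  - move=> y Hy; rewrite Et //; lia.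
pose c := fun x => cs (x - (x %% g)%Z)%R.
exists c => n x.
rewrite (@dep (fun m y => exists z, y = v1 *+ m + z * g)%R _ _ n c cs x
   (x - ((x + v1 *+ n) %% g)%Z)%R).
- have -> : (x - ((x + v1 *+ n) %% g)%Z = - (v1 *+ n) + ((x + v1 *+ n) %/ g)%Z * g)%R.
    have := divz_eq (x + v1 *+ n)%R g; set D := (((x + v1 *+ n) %/ g)%Z * g)%R.
    set M := ((x + v1 *+ n) %% g)%Z; move=> HD; lia.
  exact: Hstar.
- by exists 0%R; rewrite mulr0n mul0r addr0.
- move=> m y i [z ->].
  have /dvdzP [q Hq] := Hbez i.
  exists (z + q)%R; rewrite -/g in Hq; rewrite /dd -/v1 in Hq.
  have -> : tnth N i = (q * g + v1)%R by rewrite -Hq; ring.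
  rewrite mulrS; ring.
- move=> y [z ->]; rewrite /c; congr cs.
  have -> : (x + (v1 *+ n + z * g) = z * g + (x + v1 *+ n))%R by ring.
  rewrite modzMDl; ring.
Qed.
End ZCA.

Lemma nat_to_Z (A : finType) k (N : k.-tuple nat) (f : k.-tuple A -> A)
  (c : nat -> A) (cZ : int -> A) :
  (forall j : nat, cZ (Posz j) = c j) ->
  forall n j, iter n (ca_global addn N f) c j =
    iter n (ca_global (fun x y : int => (x + y)%R) (map_tuple Posz N) f) cZ (Posz j).
Proof.
move=> H; elim=> [|n IH] j /=; first by rewrite H.
rewrite /ca_global; congr f; apply: eq_from_tnth => i.
by rewrite !tnth_mktuple tnth_map IH PoszD.
Qed.

Theorem proposition2p4 :
  (forall (A : finType) (k : nat) (N : k.-tuple nat) (f : k.-tuple A -> A) (s : A),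
     ~ nilpotent (ca_global addn N f) -> spreading f s ->
     exists c : nat -> A, forall (n : nat) (j : nat),
       iter n (ca_global addn N f) c j != s)
  /\
  (forall (A : finType) (k : nat) (N : k.-tuple int) (f : k.-tuple A -> A) (s : A),
     ~ nilpotent (ca_global (fun x y : int => (x + y)%R) N f) -> spreading f s ->
     exists c : int -> A, forall (n : nat) (j : int),
       iter n (ca_global (fun x y : int => (x + y)%R) N f) c j != s).
Proof.
split; last first.
  by move=> A k N f s nn sp; exact: mainZ sp nn.
move=> A k N f s nn sp.
have nnZ : ~ nilpotent (ca_global (fun x y : int => (x + y)%R) (map_tuple Posz N) f).
  move=> [q [Hq Hn]]; apply: nn; exists q; split.
    move=> j; have := @nat_to_Z A k N f (fun _ => q) (fun _ => q) (fun _ => erefl) 1 j.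
    by rewrite /= => ->.
  move=> c; have [n Hn'] := Hn (fun x => c (absz x)); exists n => j.
  by rewrite (@nat_to_Z A k N f c (fun x => c (absz x))).
have [cZ HcZ] := @mainZ _ _ _ _ s sp nnZ.
exists (fun j => cZ (Posz j)) => n j.
by rewrite (@nat_to_Z A k N f (fun j => cZ (Posz j)) cZ).
Qed.
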